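(* For any partition $\lambda$, the function $s_\lambda:\mathbb{N}\to\mathbb{N}$ is a Castelnuovo function of the same weight as $\lambda$. The correspondence $\lambda\mapsto s_\lambda$ is a surjective map from the set of all partitions to the set of all Castelnuovo functions. Furthermore $(b(\lambda),w(\lambda))=(b(s_\lambda),w(s_\lambda))$.
   Context: $\mathbb{N}=\{0,1,2,\dots\}$. A partition is a finite nonincreasing sequence $\lambda=(\lambda_1,\dots,\lambda_r)$ of positive integers (the empty sequence is the partition of $0$); set $\lambda_i=0$ for $i<1$ and $i>r$; its weight is $\sum_i\lambda_i$. Its Ferrers graph has row $i$ (rows indexed from $0$) containing $\lambda_{i+1}$ left-justified unit squares, columns indexed from $0$; the square in row $r$, column $c$ is black if $r+c$ is even and white otherwise; $b(\lambda)$, $w(\lambda)$ are the numbers of black and white squares. Define $s_\lambda(m)$, for $m\in\mathbb{N}$, as the number of squares $(r,c)$ of the Ferrers graph with $r+c=m$, i.e. $s_\lambda(m)=\#\{i\ge 1: i\le m+1,\ \lambda_i\ge m+2-i\}$. A Castelnuovo function is a finitely supported function $s:\mathbb{N}\to\mathbb{N}$ such that for some integer $\sigma\ge 0$, $s(0)=1,s(1)=2,\dots,s(\sigma-1)=\sigma$ and $s(\sigma-1)\ge s(\sigma)\ge s(\sigma+1)\ge\dots\ge 0$ (with the convention $s(-1)=0$ when $\sigma=0$). Its weight is $\sum_n s(n)$, and $b(s)=\sum_i s(2i)$, $w(s)=\sum_i s(2i+1)$. *)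

(* Defs.v *)
From mathcomp Require Import all_boot.
Set Implicit Arguments. Unset Strict Implicit. Unset Printing Implicit Defensive.

Definition is_partition (l : seq nat) : Prop :=
  sorted geq l /\ all (fun x => 0 < x) l.

(* lambda_i, 1-indexed; 0 outside 1..r *)
Definition part (l : seq nat) (i : nat) : nat :=
  if i is i'.+1 then nth 0 l i' else 0.

Definition pweight (l : seq nat) : nat := sumn l.

(* Squares (r,c) of the Ferrers graph: row r (from 0) has lambda_{r+1} squares. *)
Definition black (l : seq nat) : nat :=
  \sum_(r < size l) \sum_(c < nth 0 l r) ~~ odd (r + c).
Definition white (l : seq nat) : nat :=
  \sum_(r < size l) \sum_(c < nth 0 l r) odd (r + c).

Definition slam (l : seq nat) (m : nat) : nat :=
  \sum_(1 <= i < m.+2) (m.+2 - i <= part l i).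

Definition fin_supp (s : nat -> nat) (N : nat) : Prop :=
  forall n, N <= n -> s n = 0.

Definition is_castelnuovo (s : nat -> nat) : Prop :=
  (exists N, fin_supp s N) /\
  exists sigma : nat,
    (forall n, n < sigma -> s n = n.+1) /\
    (if sigma is sigma'.+1 then s sigma <= s sigma' else s 0 <= 0) /\
    (forall n, sigma <= n -> s n.+1 <= s n).

(* Sums over N of a finitely supported function, truncated at a support bound N *)
Definition sweight (s : nat -> nat) (N : nat) : nat := \sum_(n < N) s n.
Definition sblack (s : nat -> nat) (N : nat) : nat := \sum_(n < N | ~~ odd n) s n.
Definition swhite (s : nat -> nat) (N : nat) : nat := \sum_(n < N | odd n) s n.

(* Main.v *)
Require Import Defs.
From mathcomp Require Import all_boot.
From mathcomp Require Import zify.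
Set Implicit Arguments. Unset Strict Implicit. Unset Printing Implicit Defensive.

Definition dg (mu : nat -> nat) (m : nat) : nat :=
  \sum_(0 <= i < m.+1) (m - i < mu i).

Lemma leq_bool (a b : bool) : (a -> b) -> (a : nat) <= b.
Proof. by case: a; case: b => // /(_ isT). Qed.

Lemma sum0 m n (F : nat -> nat) :
  (forall i, m <= i < n -> F i = 0) -> \sum_(m <= i < n) F i = 0.
Proof.
move=> H; rewrite (eq_big_nat _ _ H) sum_nat_const_nat; lia.
Qed.

Lemma sum_ge_term m n (F : nat -> nat) r :
  m <= r < n -> F r <= \sum_(m <= i < n) F i.
Proof.
move=> /andP [h1 h2]; rewrite (big_cat_nat (n:=r)) //=; last exact: ltnW.
rewrite (@big_ltn _ _ _ r n) //; lia.
Qed.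

Lemma mono (mu : nat -> nat) : (forall i, mu i.+1 <= mu i) ->
  forall i j, i <= j -> mu j <= mu i.
Proof.
move=> hmu i j /subnKC <-; elim: (j - i) => [|k IH]; rewrite ?addn0 // addnS.
exact: leq_trans (hmu _) IH.
Qed.

Lemma dg_le mu m : dg mu m <= m.+1.
Proof.
rewrite /dg; apply: leq_trans (_ : \sum_(0 <= i < m.+1) 1 <= _).
  by apply: leq_sum => i _; case: (_ < _).
by rewrite sum_nat_const_nat; lia.
Qed.

Lemma dg_step mu : (forall i, mu i.+1 <= mu i) ->
  forall m, dg mu m < m.+1 -> dg mu m.+1 <= dg mu m.
Proof.
move=> hmu m hlt.
case: (boolP [exists r : 'I_m.+1, ~~ (m - r < mu r)]) =>
    [/existsP [[r hr] /= hn] | /existsPn hall]; last first.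
  exfalso; move: hlt; rewrite /dg (eq_big_nat _ _ (F2 := fun _ => 1)).
    by rewrite sum_nat_const_nat subn0 muln1 ltnn.
  move=> i /andP [_ hi]; have := hall (Ordinal hi); by rewrite /= negbK => ->.
have e1 : dg mu m.+1 = \sum_(0 <= i < r) (m.+1 - i < mu i) + (m.+1 - r < mu r)
     + \sum_(r <= i < m.+1) (m.+1 - i.+1 < mu i.+1).
  rewrite /dg (big_cat_nat (n:=r)) //=; last lia.
  rewrite big_nat_recl; lia.
have e2 : dg mu m = \sum_(0 <= i < r) (m - i < mu i)
     + \sum_(r <= i < m.+1) (m - i < mu i).
  by rewrite /dg (big_cat_nat (n:=r)) //=; lia.
rewrite e1 e2 -addnA; apply: leq_add.
  by apply: leq_sum => i _; apply: leq_bool; lia.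
have -> : (m.+1 - r < mu r) = false by lia.
rewrite add0n; apply: leq_sum => i _; apply: leq_bool.
rewrite subSS => h; exact: (leq_trans h (hmu i)).
Qed.

Lemma dg_zero mu K : (forall i, mu i.+1 <= mu i) -> (forall r, K <= r -> mu r = 0) ->
  forall n, K + mu 0 <= n -> dg mu n = 0.
Proof.
move=> hmu hK n hn; rewrite /dg; apply: sum0 => i /andP [_ hi].
case: (leqP K i) => hKi; first by rewrite hK.
have := mono hmu (leq0n i) => h; have -> : (n - i < mu i) = false by lia. by [].
Qed.

Lemma cast_ext s1 s2 : s1 =1 s2 -> is_castelnuovo s1 -> is_castelnuovo s2.
Proof.
move=> e [[N hN] [sg [h1 [h2 h3]]]]; split.
  by exists N => n hn; rewrite -e hN.
exists sg; split; first by move=> n hn; rewrite -e h1.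
split; last by move=> n hn; rewrite -!e h3.
by case: sg h1 h2 h3 => [|sg] _; rewrite -?e.
Qed.

Lemma dg_cast mu K : (forall i, mu i.+1 <= mu i) -> (forall r, K <= r -> mu r = 0) ->
  is_castelnuovo (dg mu).
Proof.
move=> hmu hK; split; first by exists (K + mu 0) => n; exact: (dg_zero hmu hK).
have ex : exists m, dg mu m < m.+1.
  by exists (K + mu 0); rewrite (dg_zero hmu hK).
case: (ex_minnP ex) => sg hsg hmin.
have hlow : forall n, n < sg -> dg mu n = n.+1.
  move=> n hn; apply/eqP; rewrite eqn_leq dg_le /= leqNgt; apply/negP => h.
  have := hmin n h; lia.
have hhigh : forall n, sg <= n -> dg mu n < n.+1.
  elim=> [|n IH] h; first by move: hsg; have -> : sg = 0 by lia.
  case: (leqP sg n) => h'; last by have -> : n.+1 = sg by lia.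
  have := dg_step hmu (IH h'); have := IH h'; lia.
exists sg; split => //; split; last by move=> n hn; apply: dg_step => //; exact: hhigh.
case: sg hsg hmin hlow hhigh => [|sg] hsg _ hlow _; first by lia.
by rewrite (hlow sg) //.
Qed.

Lemma thresh N (P : nat -> bool) : (forall c, P c.+1 -> P c) ->
  (forall c, N <= c -> ~~ P c) -> forall c, (c < \sum_(0 <= i < N) P i) = P c.
Proof.
elim: N P => [|N IH] P hd hN c.
  by rewrite big_geq // ltn0; apply/esym/negbTE/hN.
rewrite big_nat_recl //.
case hP0: (P 0); last first.
  have hall : forall c, P c = false.
    by elim=> [|k IHk] //; apply/negP => /hd; rewrite IHk.
  rewrite hall sum0 //; by move=> i _; rewrite hall.
have := IH (fun c => P c.+1) (fun c => @hd c.+1) (fun c h => hN c.+1 h).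
case: c => [|c] H; first by rewrite hP0.
by rewrite add1n ltnS H.
Qed.

Lemma sum_ltn k n : \sum_(0 <= i < n) (i < k) = minn k n.
Proof.
elim: n => [|n IH]; first by rewrite big_geq // minn0.
rewrite big_nat_recr //= IH; case: (ltnP n k) => h /=; lia.
Qed.

Lemma geq_trans' : transitive geq.
Proof. by move=> y x z h1 h2; apply: leq_trans h2 h1. Qed.

Lemma all0 s : all (fun y => y <= 0) s ->
  filter (fun x => 0 < x) s = [::] /\ forall i, nth 0 s i = 0.
Proof.
elim: s => [|y s IH] /=; first by split => // i; rewrite nth_nil.
move=> /andP [hy /IH [h1 h2]]; have -> : y = 0 by lia.
by split => // [[|i]] /=.
Qed.

Lemma filter_pos_nth s : sorted geq s ->
  forall i, nth 0 (filter (fun x => 0 < x) s) i = nth 0 s i.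
Proof.
elim: s => [|x s IH] //= hs i.
have hs' := path_sorted hs.
case: (posnP x) => hx.
  have hall := order_path_min geq_trans' hs.
  have : all (fun y => y <= 0) s by rewrite hx in hall.
  move=> /all0 [h1 h2]; rewrite hx /= h1 nth_nil; by case: i => [|i] /=.
by case: i => [|i] //=; rewrite IH.
Qed.

Lemma sorted_map_iota (f : nat -> nat) : (forall i, f i.+1 <= f i) ->
  forall a n, sorted geq (map f (iota a n)).
Proof.
move=> hf a n; elim: n a => [|n IH] a //=.
case: n IH => [|n] IH //= ; have := IH a.+1; rewrite /= => ->; by rewrite andbT hf.
Qed.

Lemma sorted_nth_mono l : sorted geq l -> forall i, nth 0 l i.+1 <= nth 0 l i.
Proof.
elim: l => [|x l IH] // hs [|i]; last by move: hs => /= /path_sorted /IH.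
by case: l hs {IH} => [|y l] //= /andP [].
Qed.

Lemma shift_sum a b (G : nat -> nat) :
  \sum_(a <= n < a + b) G n = \sum_(0 <= c < b) G (a + c).
Proof.
rewrite -{1}(add0n a) big_addn addKn; apply: eq_bigr => c _; by rewrite addnC.
Qed.

Lemma wsum mu (F : nat -> nat) N K :
  (forall r, K <= r -> mu r = 0) -> K <= N -> (forall r, 0 < mu r -> r + mu r <= N) ->
  \sum_(0 <= n < N) F n * dg mu n = \sum_(0 <= r < K) \sum_(0 <= c < mu r) F (r + c).
Proof.
move=> hK hKN hN.
have e1 : forall n, n < N -> dg mu n = \sum_(0 <= r < N) ((r <= n) && (n - r < mu r)).
  move=> n hn; rewrite /dg (big_cat_nat (n:=n.+1) (p:=N)) //= [X in _ + X]sum0 ?addn0.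
    apply: eq_big_nat => i /andP [_ hi]; by have -> : i <= n by lia.
  move=> i /andP [hi _]; by have -> : (i <= n) = false by lia.
rewrite (eq_big_nat _ _ (F2 := fun n => \sum_(0 <= r < N) F n * ((r <= n) && (n - r < mu r)))); last first.
  by move=> n /andP [_ hn]; rewrite e1 // big_distrr.
rewrite exchange_big /=.
rewrite (big_cat_nat (n:=K) (p:=N)) //= [X in _ + X]sum0 ?addn0; last first.
  move=> r /andP [hr _]; apply: sum0 => n _; rewrite hK //.
  have -> : (n - r < 0) = false by lia.
  by rewrite andbF muln0.
apply: eq_big_nat => r /andP [_ hr].
case: (posnP (mu r)) => hm.
  rewrite hm [RHS]big_geq //; apply: sum0 => n _.
  have -> : (n - r < 0) = false by lia.
  by rewrite andbF muln0.
have hrN := hN r hm.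
rewrite (big_cat_nat (n:=r)) //=; last lia.
rewrite (big_cat_nat (n:=r + mu r) (m:=r) (p:=N)) //=; last lia.
rewrite sum0 ?add0n; last first.
  move=> n /andP [_ hn]; have -> : (r <= n) = false by lia.
  by rewrite muln0.
rewrite [X in _ + X]sum0 ?addn0; last first.
  move=> n /andP [hn _]; have -> : (n - r < mu r) = false by lia.
  by rewrite andbF muln0.
rewrite shift_sum; apply: eq_big_nat => c /andP [_ hc].
have -> : (r <= r + c) && (r + c - r < mu r) by lia.
  by rewrite muln1.
Qed.

Lemma part1 l : is_partition l ->
     is_castelnuovo (slam l) /\
     (forall N, fin_supp (slam l) N ->
        sweight (slam l) N = pweight l /\
        black l = sblack (slam l) N /\
        white l = swhite (slam l) N).
Proof.
move=> [hs hpos].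
set mu := nth 0 l.
have hmu : forall i, mu i.+1 <= mu i := sorted_nth_mono hs.
have hK : forall r, size l <= r -> mu r = 0 := fun r h => nth_default 0 h.
have hsl : slam l =1 dg mu.
  move=> m; rewrite /slam /dg big_add1 /=; apply: eq_big_nat => i /andP [_ hi].
  by have -> : m.+2 - i.+1 = (m - i).+1 by lia.
split; first exact: cast_ext (fun m => esym (hsl m)) (dg_cast hmu hK).
move=> N hN.
have hN' : forall r, 0 < mu r -> r + mu r <= N.
  move=> r hr; have : 0 < dg mu (r + mu r).-1.
    have H := @sum_ge_term 0 (r + mu r).-1.+1 (fun i => ((r + mu r).-1 - i < mu i) : nat) r.
    rewrite /dg; apply: leq_trans (H _); last lia.
    by have -> : ((r+mu r).-1 - r < mu r) by lia.
  rewrite -hsl; case: (leqP N (r + mu r).-1) => h; first by rewrite hN.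
  lia.
have hposr : forall r, r < size l -> 0 < mu r.
  by move=> r hr; apply: (allP hpos); apply: mem_nth.
have hKN : size l <= N.
  case: (size l) hposr => // k hk; have h1 := hk k (ltnSn k); have := hN' k h1; lia.
have key : forall F, \sum_(0 <= n < N) F n * slam l n =
    \sum_(0 <= r < size l) \sum_(0 <= c < mu r) F (r + c).
  move=> F; rewrite -(wsum F hK hKN hN'); apply: eq_bigr => n _; by rewrite hsl.
split; [|split].
- rewrite /sweight /pweight.
  have -> : \sum_(n < N) slam l n = \sum_(0 <= n < N) 1 * slam l n.
    by rewrite big_mkord; apply: eq_bigr => n _; rewrite mul1n.
  rewrite key sumnE [RHS](big_nth 0); apply: eq_big_nat => r _.
  by rewrite sum_nat_const_nat subn0 muln1.
- rewrite /sblack /black.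
  have -> : \sum_(n < N | ~~ odd n) slam l n = \sum_(0 <= n < N) (~~ odd n : nat) * slam l n.
    rewrite big_mkcond big_mkord; apply: eq_bigr => n _.
    by case: (odd n); rewrite /= ?mul0n ?mul1n.
  rewrite key big_mkord; apply: eq_bigr => r _; by rewrite big_mkord.
- rewrite /swhite /white.
  have -> : \sum_(n < N | odd n) slam l n = \sum_(0 <= n < N) (odd n : nat) * slam l n.
    rewrite big_mkcond big_mkord; apply: eq_bigr => n _.
    by case: (odd n); rewrite /= ?mul0n ?mul1n.
  rewrite key big_mkord; apply: eq_bigr => r _; by rewrite big_mkord.
Qed.

Lemma part2 s : is_castelnuovo s ->
  exists l : seq nat, is_partition l /\ forall m, slam l m = s m.
Proof.
move=> [[N hN] [sg [h1 [h2 h3]]]].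
have hle : forall m, s m <= m.+1.
  move=> m; case: (ltnP m sg) => hm; first by rewrite h1.
  have hs_sg : s sg <= sg.
    case: sg h1 h2 h3 hm => [|sg] h1 h2 h3 hm; first by lia.
    by rewrite (h1 sg) in h2.
  have hmono : forall n, sg <= n -> s n <= s sg.
    move=> n /subnKC <-; elim: (n - sg) => [|k IH]; rewrite ?addn0 // addnS.
    apply: leq_trans (h3 _ _) IH; lia.
  have := hmono m hm; lia.
have hdown : forall r c, r < s (r + c).+1 -> r < s (r + c).
  move=> r c h; case: (ltnP (r + c) sg) => hm; first by rewrite h1 //; lia.
  exact: leq_trans h (h3 _ hm).
pose len := fun r => \sum_(0 <= c < N) (r < s (r + c)).
have hthr : forall r c, (c < len r) = (r < s (r + c)).
  move=> r; apply: thresh.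
    move=> c; rewrite addnS; exact: hdown.
  move=> c hc; rewrite hN ?ltn0 //; lia.
have hlen_mono : forall r, len r.+1 <= len r.
  move=> r; apply: leq_sum => c _; apply: leq_bool => h.
  apply: hdown; rewrite -addSn; exact: ltnW h.
have hlen0 : forall r, N <= r -> len r = 0.
  move=> r hr; apply: sum0 => c _; rewrite hN ?ltn0 //; lia.
exists (filter (fun x => 0 < x) (map len (iota 0 N))).
have hsort := sorted_map_iota hlen_mono 0 N.
have hnth : forall i, nth 0 (filter (fun x => 0 < x) (map len (iota 0 N))) i = len i.
  move=> i; rewrite filter_pos_nth //; case: (ltnP i N) => hi.
    by rewrite (nth_map 0) ?size_iota // nth_iota.
  by rewrite nth_default ?size_map ?size_iota // hlen0.
split.
  split; [exact: (sorted_filter geq_trans' _ hsort) | exact: filter_all].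
move=> m; rewrite /slam big_add1 /=.
rewrite (eq_big_nat _ _ (F2 := fun i => (i < s m) : nat)).
  by rewrite sum_ltn; have := hle m; lia.
move=> i /andP [_ hi]; rewrite /part hnth.
have -> : m.+2 - i.+1 = (m - i).+1 by lia.
by have := hthr i (m - i); rewrite subnKC; [move=> -> | lia].
Qed.

Theorem proposition2 :
  (forall l : seq nat, is_partition l ->
     is_castelnuovo (slam l) /\
     (forall N, fin_supp (slam l) N ->
        sweight (slam l) N = pweight l /\
        black l = sblack (slam l) N /\
        white l = swhite (slam l) N)) /\
  (forall s : nat -> nat, is_castelnuovo s ->
     exists l : seq nat, is_partition l /\ forall m, slam l m = s m).
Proof. split; [exact: part1 | exact: part2]. Qed.
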